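(* Let $M$ be a prefix matching and let $a_1\to b_1\to\cdots\to a_p\to b_p\to a_{p+1}=a_1$ be a directed cycle in $\Gamma^M$ as described in the context, with $a_i=(a_{i,0},\dots,a_{i,k})$. Assume that for all $i$, $d_i=c_i+1$ and $d(a_{i+1,c_i},a_{i+1,c_i+1})=1$. Then $d(a_{i,d_i-1},a_{i,d_i})=1$ for all $i$.
   Context: $G$ is a finite simple connected graph with distance $d$; $\ell(x_0,\dots,x_k)=\sum_{i=0}^{k-1}d(x_i,x_{i+1})$; sequences are elements of $I_{k,l}(G)=\{(x_0,\dots,x_k)\in V(G)^{k+1}:x_i\ne x_{i+1}\ \forall i,\ \ell=l\}$. $\Gamma$ is the directed graph on sequences with an edge $a\to b$ whenever $b$ is obtained from $a=(x_0,\dots,x_k)$ by deleting some $x_i$, $1\le i\le k-1$, with $\ell(b)=\ell(a)$. A matching is a set of pairwise vertex-disjoint edges of $\Gamma$; $\Gamma^M$ is $\Gamma$ with edges of $M$ reversed. Matching states: ''unmatched'', ''insert$(i,v)$'' (matched to $(x_0,\dots,x_i,v,x_{i+1},\dots,x_k)$), ''delete$(i)$'' (matched to $(x_0,\dots,\hat x_i,\dots,x_k)$). A prefix matching: whenever $(x_0,\dots,x_k)$ has state insert$(i,v)$ (resp. delete$(i)$), every sequence $(x_0,\dots,x_{i+1},y_{i+2},\dots,y_{k'})$ has the same state. Cycle setting: $a_i\in I_{k,l}(G)$, $b_i\in I_{k-1,l}(G)$, each $a_i\to b_i$ is an edge of $\Gamma$ not in $M$, each $b_i\to a_{i+1}$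 is a reversed edge of $M$; $d_i$ is the position of the entry of $a_i$ deleted to obtain $b_i$; $a_{i+1}=(b_{i,0},\dots,b_{i,c_i},u_i,b_{i,c_i+1},\dots,b_{i,k-1})$ where $b_i=(b_{i,0},\dots,b_{i,k-1})$; indices $i$ are taken modulo $p$. *)

(* Defs.v *)
From mathcomp Require Import all_boot.
Set Implicit Arguments. Unset Strict Implicit. Unset Printing Implicit Defensive.

Section Graph.
Variables (T : finType) (adj : rel T).

Definition simple_connected_graph : Prop :=
  symmetric adj /\ irreflexive adj /\ (forall x y, connect adj x y).

Definition walk_of_length (x y : T) (n : nat) : bool :=
  [exists p : n.-tuple T, path adj x p && (last x p == y)].

(* Graph distance: the least n such that a walk of length n from x to y
   exists (in a connected graph this is < #|T|). *)
Definition dist (x y : T) : nat := find (walk_of_length x y) (iota 0 #|T|).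

Definition ell (s : seq T) : nat :=
  if s is x0 :: s' then sumn (pairmap dist x0 s') else 0.

(* Consecutive entries distinct, nonempty: s lies in some I_{k,l}(G). *)
Definition valid_seq (s : seq T) : bool :=
  if s is x0 :: s' then path (fun u v => u != v) x0 s' else false.

Definition in_I (k l : nat) (s : seq T) : bool :=
  [&& size s == k.+1, valid_seq s & ell s == l].

Definition delete_at (i : nat) (s : seq T) : seq T := take i s ++ drop i.+1 s.
Definition insert_at (i : nat) (v : T) (s : seq T) : seq T :=
  take i s ++ v :: drop i s.

Definition Gamma_edge (a b : seq T) : Prop :=
  valid_seq a /\ valid_seq b /\
  exists i, [/\ 1 <= i, i <= (size a).-2, b = delete_at i a & ell b = ell a].

Definition is_matching (M : seq T -> seq T -> Prop) : Prop :=
  (forall a b, M a b -> Gamma_edge a b) /\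
  (forall a b a' b', M a b -> M a' b' ->
     (a = a' \/ a = b' \/ b = a' \/ b = b') -> a = a' /\ b = b').

Definition state_insert (M : seq T -> seq T -> Prop) (x : seq T) (i : nat) (v : T) : Prop :=
  M (insert_at i.+1 v x) x.
Definition state_delete (M : seq T -> seq T -> Prop) (x : seq T) (i : nat) : Prop :=
  M x (delete_at i x).

Definition prefix_matching (M : seq T -> seq T -> Prop) : Prop :=
  is_matching M /\
  (forall x i v, valid_seq x -> state_insert M x i v ->
     forall y, valid_seq y -> take i.+2 y = take i.+2 x -> state_insert M y i v) /\
  (forall x i, valid_seq x -> state_delete M x i ->
     forall y, valid_seq y -> take i.+2 y = take i.+2 x -> state_delete M y i).

End Graph.

(* Main.v *)
Require Import Defs.
From mathcomp Require Import all_boot.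
From mathcomp Require Import zify.

Lemma swap1 (k p : nat) (F G : nat -> nat) : p < k ->
  (forall j, j < k -> j != p -> F j = G j) ->
  \sum_(j < k) F j + G p = \sum_(j < k) G j + F p.
Proof.
move=> Hp H.
rewrite [X in X + G p](bigD1 (Ordinal Hp)) // [X in _ = X + _](bigD1 (Ordinal Hp)) //=.
rewrite (eq_bigr (fun j : 'I_k => G j)); first by lia.
move=> j Hj; apply: H => //.
Qed.

Lemma swap2 (k p : nat) (F G : nat -> nat) : p.+1 < k ->
  (forall j, j < k -> j != p -> j != p.+1 -> F j = G j) ->
  \sum_(j < k) F j + G p + G p.+1 = \sum_(j < k) G j + F p + F p.+1.
Proof.
move=> Hp H.
set K := fun j => if j == p then G j else F j.
have E1 := @swap1 k p F K (ltnW Hp).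
have E2 := @swap1 k p.+1 K G Hp.
have HK1 : K p = G p by rewrite /K eqxx.
have HK2 : K p.+1 = F p.+1 by rewrite /K (_ : (p.+1 == p) = false) //; lia.
rewrite HK1 in E1; rewrite HK2 in E2.
suff: \sum_(j < k) F j + G p = \sum_(j < k) K j + F p /\
      \sum_(j < k) K j + G p.+1 = \sum_(j < k) G j + F p.+1 by lia.
split.
- apply: E1 => j _ Hj; by rewrite /K (negbTE Hj).
- apply: E2 => j Hj Hj1; rewrite /K; case: eqP => // /eqP Hjp.
  by apply: H.
Qed.

Lemma ell_nth (T : finType) (adj : rel T) (z : T) (s : seq T) :
  ell adj s = \sum_(j < (size s).-1) dist adj (nth z s j) (nth z s j.+1).
Proof.
case: s => [|x s]; first by rewrite big_ord0.
elim: s x => [|y s IH] x; first by rewrite big_ord0.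
rewrite /= big_ord_recl /=.
have := IH y; rewrite /= => ->.
by [].
Qed.

Lemma dist0 (T : finType) (adj : rel T) x y : dist adj x y = 0 -> x = y.
Proof.
rewrite /dist => H.
have Hc : 0 < #|T| by apply/card_gt0P; exists x.
have Hh : has (walk_of_length adj x y) (iota 0 #|T|).
  by rewrite has_find H size_iota.
have := nth_find 0 Hh; rewrite H nth_iota // add0n.
case/existsP => t /andP[_].
by rewrite (_ : tval t = [::]) ?(eqP) //=; [move/eqP | case: t => -[]].
Qed.

Lemma valid_nth (T : finType) (s : seq T) (z : T) j :
  valid_seq s -> j.+1 < size s -> nth z s j != nth z s j.+1.
Proof.
case: s => [|x s] //= Hv Hj.
by move/(pathP z): Hv => /(_ j Hj).
Qed.

Lemma nth_repl (T : finType) (z v : T) (s : seq T) e t : e < size s ->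
  nth z (insert_at e v (delete_at e s)) t = if t == e then v else nth z s t.
Proof.
move=> He; rewrite /insert_at /delete_at.
have Hs : size (take e s) = e by rewrite size_takel // ltnW.
rewrite take_cat Hs ltnn subnn take0 cats0 drop_cat Hs ltnn subnn drop0.
rewrite nth_cat Hs.
case: ltngtP => Hte.
- by rewrite nth_take.
- rewrite (_ : t - e = (t - e.+1).+1); last by lia.
  by rewrite /= nth_drop; congr nth; lia.
- by rewrite Hte subnn.
Qed.

Lemma size_repl (T : finType) (v : T) (s : seq T) e : e < size s ->
  size (insert_at e v (delete_at e s)) = size s.
Proof.
move=> He; rewrite /insert_at /delete_at.
have Hs : size (take e s) = e by rewrite size_takel // ltnW.
rewrite take_cat Hs ltnn subnn take0 cats0 drop_cat Hs ltnn subnn drop0.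
rewrite size_cat /= size_drop Hs; lia.
Qed.

(* Indices are 0-based: the cycle is a_0 -> b_0 -> a_1 -> ... -> b_{p-1} -> a_p = a_0. *)
Theorem lemma3p8 (T : finType) (adj : rel T)
  (HG : simple_connected_graph adj)
  (M : seq T -> seq T -> Prop) (HM : prefix_matching adj M)
  (k l p : nat) (Hp : 0 < p)
  (a b : nat -> seq T) (d c : nat -> nat) (u : nat -> T)
  (Hper : a p = a 0)
  (Ha : forall i, i < p -> in_I adj k l (a i))
  (Hb : forall i, i < p -> in_I adj k.-1 l (b i))
  (Hedge : forall i, i < p -> Gamma_edge adj (a i) (b i))
  (HnotM : forall i, i < p -> ~ M (a i) (b i))
  (Hd : forall i, i < p -> [/\ 1 <= d i, d i <= k.-1 & b i = delete_at (d i) (a i)])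
  (HMrev : forall i, i < p -> M (a i.+1) (b i))
  (Hc : forall i, i < p -> a i.+1 = insert_at (c i).+1 (u i) (b i))
  (Hdc : forall i, i < p -> d i = (c i).+1)
  (Hdist1 : forall i, i < p ->
     dist adj (nth (u i) (a i.+1) (c i)) (nth (u i) (a i.+1) (c i).+1) = 1) :
  forall i, i < p -> dist adj (nth (u i) (a i) (d i).-1) (nth (u i) (a i) (d i)) = 1.
Proof.
set z := u 0.
pose g s j := dist adj (nth z s j) (nth z s j.+1).
pose Psi s := \sum_(j < k) j * g s j.
have HA : forall i, i <= p -> [/\ size (a i) = k.+1, valid_seq (a i) & ell adj (a i) = l].
  move=> i Hi; have [Hi'|Hi'] : i < p \/ i = p by lia.
  - by case/and3P: (Ha i Hi') => /eqP -> -> /eqP ->.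
  - by rewrite Hi' Hper; case/and3P: (Ha 0 Hp) => /eqP -> -> /eqP ->.
have Hk : 1 < k by case: (Hd 0 Hp) => H1 H2 _; lia.
have step : forall i, i < p ->
  Psi (a i) + g (a i) (c i) = Psi (a i.+1) + 1 /\ 1 <= g (a i) (c i).
  move=> i Hi.
  have [Hs0 Hv0 He0] := HA i (ltnW Hi).
  have [Hs1 Hv1 He1] := HA i.+1 Hi.
  case: (Hd i Hi) => Hd1 Hd2 Hbi.
  have Hci := Hdc i Hi.
  have Hai : a i.+1 = insert_at (c i).+1 (u i) (delete_at (c i).+1 (a i))
    by rewrite Hc // Hbi Hci.
  have Hlt : (c i).+1 < size (a i) by rewrite Hs0; lia.
  have Hn : forall t, nth z (a i.+1) t = if t == (c i).+1 then u i else nth z (a i) t.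
    by move=> t; rewrite Hai nth_repl.
  have Hsame : forall j, j < k -> j != c i -> j != (c i).+1 -> g (a i) j = g (a i.+1) j.
    move=> j _ H1 H2; rewrite /g !Hn (negbTE H2).
    by rewrite (_ : (j.+1 == (c i).+1) = false) //; apply/negbTE.
  have Hc1 : (c i).+1 < k by lia.
  have E1 := @swap2 k (c i) (g (a i)) (g (a i.+1)) Hc1 Hsame.
  have E2 := @swap2 k (c i) (fun j => j * g (a i) j) (fun j => j * g (a i.+1) j) Hc1
    (fun j H1 H2 H3 => congr1 (muln j) (Hsame j H1 H2 H3)).
  rewrite /= in E2.
  have El0 : \sum_(j < k) g (a i) j = l by rewrite -He0 (ell_nth _ adj z) Hs0.
  have El1 : \sum_(j < k) g (a i.+1) j = l by rewrite -He1 (ell_nth _ adj z) Hs1.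
  have H1 : g (a i.+1) (c i) = 1.
    rewrite /g -(Hdist1 i Hi).
    rewrite (set_nth_default (u i) z) ?Hs1; last lia.
    by rewrite (set_nth_default (u i) z (n:=(c i).+1)) ?Hs1; last lia.
  have Hpos : 1 <= g (a i) (c i).
    rewrite lt0n; apply/eqP => /dist0 /eqP; apply/negP.
    by apply: valid_nth => //; rewrite Hs0; lia.
  rewrite El0 El1 H1 in E1.
  split => //.
  rewrite /Psi; rewrite H1 in E2.
  move: E1 E2; set x := g (a i) (c i); set y := g (a i) (c i).+1;
    set y' := g (a i.+1) (c i).+1; set W0 := \sum_(j < k) _; set W1 := \sum_(j < k) _.
  move=> E1 E2.
  have Ey : y' = x + y - 1 by lia.
  rewrite Ey in E2.
  nia.
have mono : forall j, j <= p -> forall i, i <= j -> Psi (a i) <= Psi (a j).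
  elim=> [|j IH] Hj i Hij; first by rewrite (_ : i = 0) //; lia.
  have [->|Hij'] : i = j.+1 \/ i <= j by lia.
    by [].
  have := IH (ltnW Hj) i Hij'; have [S P] := step j Hj. move: S P; rewrite /Psi; set A := \sum_(j0 < k) _; set B := \sum_(j0 < k) _. lia.
move=> i Hi.
have [S Hpos] := step i Hi.
have M1 := mono p (leqnn p) i.+1 Hi.
have M2 := mono p (leqnn p) 0 (leq0n _).
have M3 := mono i (ltnW Hi) 0 (leq0n _).
rewrite Hper in M1.
have Hg : g (a i) (c i) = 1 by lia.
have [Hs0 _ _] := HA i (ltnW Hi).
case: (Hd i Hi) => Hd1 Hd2 _.
rewrite Hdc //= -Hg /g.
rewrite (set_nth_default z (u i)) ?Hs0; last by rewrite Hdc in Hd2; lia.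
by rewrite (set_nth_default z (u i) (n:=(c i).+1)) ?Hs0; last by rewrite Hdc in Hd2; lia.
Qed.
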